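(* Let $k\ge 1$, let $A,B_1,\dots,B_k,C_1,\dots,C_k\in\mathbb{C}^{r\times r}$ with $C_i+mI$ invertible for all integers $m\ge 0$ and all $i$, and assume $AB_i=B_iA$, $B_iB_j=B_jB_i$, $C_iC_j=C_jC_i$ for all $i,j\in\{1,\dots,k\}$. Let $n\ge 1$ be an integer and suppose $A+mI$ is invertible for all $m\ge 0$. Then $$F_{\mathcal A}[A+nI]=F_{\mathcal A}+\sum_{i=1}^{k} x_iB_i\Big[\sum_{n_1=1}^{n}F_{\mathcal A}[A+n_1I,\,B_i+I,\,C_i+I]\Big]C_i^{-1}.$$ Furthermore, if $A-n_1I$ is invertible for every $0\le n_1\le n$, then $$F_{\mathcal A}[A-nI]=F_{\mathcal A}-\sum_{i=1}^{k} x_iB_i\Big[\sum_{n_1=0}^{n-1}F_{\mathcal A}[A-n_1I,\,B_i+I,\,C_i+I]\Big]C_i^{-1}.$$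
   Context: For $M\in\mathbb{C}^{r\times r}$ the Pochhammer symbol is $(M)_0=I$, $(M)_m=M(M+I)\cdots(M+(m-1)I)$ for $m\ge1$, and $(M)^{-1}_m$ denotes $((M)_m)^{-1}$ (when it exists). The Lauricella matrix function is $$F_{\mathcal A}=F_{\mathcal A}[A,B_1,\dots,B_k;C_1,\dots,C_k;x_1,\dots,x_k]=\sum_{m_1,\dots,m_k\ge0}(A)_{m_1+\cdots+m_k}\prod_{i=1}^k(B_i)_{m_i}\prod_{i=1}^k(C_i)^{-1}_{m_i}\prod_{i=1}^k\frac{x_i^{m_i}}{m_i!},$$ with $x_1,\dots,x_k$ complex (scalar) variables; products of matrices are taken in the written order of increasing $i$. Identities are understood as identities of formal power series in $x_1,\dots,x_k$ with matrix coefficients (hence also wherever the series converge). Notation: $F_{\mathcal A}[A+nI, B_i+I, C_i+I]$ means $F_{\mathcal A}$ with $A$ replaced by $A+nI$, $B_i$ by $B_i+I$, $C_i$ by $C_i+I$, all other parameters and variables unchanged; $F_{\mathcal A}$ alone means the unshifted function. *)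

(* Defs.v *)
(* Complex numbers: R[i] = complex R for R : realType
   (mathcomp-real-closed); for R the reals this is C. *)
From HB Require Import structures.
From mathcomp Require Import all_boot all_order all_algebra.
From mathcomp Require Import all_reals.
From mathcomp Require Export complex.
Set Implicit Arguments. Unset Strict Implicit. Unset Printing Implicit Defensive.
Import Order.TTheory GRing.Theory Num.Theory.
Local Open Scope ring_scope.

Section Lauricella.
Variables (R : realType) (r k : nat).
Local Notation M := ('M[R[i]]_r).

Definition poch (X : M) (m : nat) : M :=
  \big[mulmx/1%:M]_(j < m) (X + (j%:R)%:M).

(* Formal power series in x_1..x_k with matrix coefficients:
   coefficient function on multi-indices m : 'I_k -> nat. *)
Definition fps := ('I_k -> nat) -> M.

(* Coefficients of the Lauricella matrix function F_A[A,B,C;x]. Products over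
   i are taken in increasing order of i. *)
Definition lauricella (A : M) (B C : 'I_k -> M) : fps := fun m =>
  ((\prod_(i < k) (m i)`!)%:R)^-1 *:
    (poch A (\sum_(i < k) m i)
     *m \big[mulmx/1%:M]_(i < k) poch (B i) (m i)
     *m \big[mulmx/1%:M]_(i < k) invmx (poch (C i) (m i))).

(* multi-index m - e_i (only used when m i > 0) *)
Definition mdec (i : 'I_k) (m : 'I_k -> nat) : 'I_k -> nat :=
  fun j => if j == i then (m j).-1 else m j.

(* x_i * F as a formal power series *)
Definition mulX (i : 'I_k) (F : fps) : fps := fun m =>
  if (0 < m i)%N then F (mdec i m) else 0.

Definition shift1 (B : 'I_k -> M) (i : 'I_k) : 'I_k -> M :=
  fun j => if j == i then B j + 1%:M else B j.

End Lauricella.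

(* Main.v *)
Require Import Defs.
From HB Require Import structures.
From mathcomp Require Import all_boot all_order all_algebra.
From mathcomp Require Import all_reals complex.
From mathcomp Require Import ring.
Import Order.TTheory GRing.Theory Num.Theory.
Local Open Scope ring_scope.

Lemma pochS_l (R : realType) (r : nat) (X : 'M[R[i]]_r) m :
  poch X m.+1 = X *m poch (X + 1%:M) m.
Proof.
rewrite /poch big_ord_recl /= raddf0 addr0; congr (_ *m _).
apply: eq_bigr => i _; rewrite /= /bump /= add1n -addn1 natrD raddfD /=.
by rewrite addrA addrAC.
Qed.

Lemma poch0 (R : realType) (r : nat) (X : 'M[R[i]]_r) : poch X 0 = 1%:M.
Proof. by rewrite /poch big_ord0. Qed.

Lemma pochS_r (R : realType) (r : nat) (X : 'M[R[i]]_r) m :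
  poch X m.+1 = poch X m *m (X + (m%:R)%:M).
Proof.
have p0 : forall Y : 'M[R[i]]_r, poch Y 0 = 1%:M by move=> Y; rewrite /poch big_ord0.
elim: m X => [|m IH] X; first by rewrite pochS_l !p0 mulmx1 mul1mx raddf0 addr0.
rewrite pochS_l IH mulmxA -pochS_l.
have -> : X + (m.+1%:R)%:M = X + 1%:M + (m%:R)%:M.
  by rewrite -addn1 natrD raddfD /= addrA addrAC.
by [].
Qed.

Lemma comm_poch (R : realType) (r : nat) (X Y : 'M[R[i]]_r) m :
  X *m Y = Y *m X -> X *m poch Y m = poch Y m *m X.
Proof.
move=> h; elim: m => [|m IH]; first by rewrite /poch big_ord0 mulmx1 mul1mx.
have e : X *m (Y + (m%:R)%:M) = (Y + (m%:R)%:M) *m X.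
  by rewrite mulmxDr mulmxDl h scalar_mxC.
by rewrite pochS_r mulmxA IH -!mulmxA e.
Qed.

Lemma unit_poch (R : realType) (r : nat) (Y : 'M[R[i]]_r) m :
  (forall c : nat, Y + (c%:R)%:M \in unitmx) -> poch Y m \in unitmx.
Proof.
move=> h; elim: m => [|m IH]; first by rewrite /poch big_ord0 unitmx1.
by rewrite pochS_r unitmx_mul IH h.
Qed.

Lemma unit_shift (R : realType) (r : nat) (Y : 'M[R[i]]_r) :
  (forall c : nat, Y + (c%:R)%:M \in unitmx) ->
  (forall c : nat, (Y + 1%:M) + (c%:R)%:M \in unitmx).
Proof.
move=> h c; have := h c.+1.
by rewrite -addn1 natrD raddfD /= addrA addrAC.
Qed.

Lemma invmx_mul (R : realType) (r : nat) (X Y : 'M[R[i]]_r) :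
  X \in unitmx -> Y \in unitmx -> invmx (X *m Y) = invmx Y *m invmx X.
Proof.
move=> hX hY; have hXY : X *m Y \in unitmx by rewrite unitmx_mul hX hY.
transitivity (invmx (X *m Y) *m (X *m Y *m (invmx Y *m invmx X))).
  by rewrite -[X *m Y *m _]mulmxA [Y *m _]mulmxA (mulmxV hY) mul1mx (mulmxV hX) mulmx1.
by rewrite mulmxA (mulVmx hXY) mul1mx.
Qed.

Lemma comm_inv (R : realType) (r : nat) (X Y : 'M[R[i]]_r) :
  X \in unitmx -> X *m Y = Y *m X -> invmx X *m Y = Y *m invmx X.
Proof.
move=> hX h.
rewrite -[invmx X *m Y]mulmx1 -(mulmxV hX) !mulmxA -[invmx X *m Y *m X]mulmxA -h.
by rewrite mulmxA (mulVmx hX) mul1mx.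
Qed.

Lemma comm_big (R : realType) (r : nat) (I : eqType) (s : seq I) (Y : 'M[R[i]]_r)
  (F : I -> 'M[R[i]]_r) :
  (forall i, i \in s -> Y *m F i = F i *m Y) ->
  Y *m \big[mulmx/1%:M]_(i <- s) F i = \big[mulmx/1%:M]_(i <- s) F i *m Y.
Proof.
elim: s => [|h s IH] hF; first by rewrite !big_nil mulmx1 mul1mx.
rewrite !big_cons mulmxA hF ?mem_head // -!mulmxA IH //.
by move=> i hi; apply: hF; rewrite in_cons hi orbT.
Qed.

Lemma big_eq_notin (R : realType) (r : nat) (I : eqType) (s : seq I) (j0 : I)
  (F G : I -> 'M[R[i]]_r) :
  j0 \notin s -> (forall i, i != j0 -> F i = G i) ->
  \big[mulmx/1%:M]_(i <- s) F i = \big[mulmx/1%:M]_(i <- s) G i.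
Proof.
move=> hs hFG; apply: eq_big_seq => i hi; apply: hFG.
by apply/eqP => e; rewrite -e hi in hs.
Qed.

Lemma big_left (R : realType) (r : nat) (I : eqType) (s : seq I) (j0 : I)
  (X : 'M[R[i]]_r) (F G : I -> 'M[R[i]]_r) :
  uniq s -> j0 \in s -> X *m F j0 = G j0 -> (forall i, i != j0 -> F i = G i) ->
  (forall i, i != j0 -> X *m F i = F i *m X) ->
  X *m \big[mulmx/1%:M]_(i <- s) F i = \big[mulmx/1%:M]_(i <- s) G i.
Proof.
move=> + + h0 hFG hc; elim: s => [|h s IH] //= /andP[hns us].
rewrite in_cons !big_cons => hj; case: (eqVneq h j0) => [e|ne].
  subst h; by rewrite mulmxA h0 (@big_eq_notin _ _ _ _ _ _ G _ hFG).
move: hj; rewrite eq_sym (negbTE ne) /= => hj.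
by rewrite mulmxA hc // -mulmxA IH // hFG.
Qed.

Lemma big_right (R : realType) (r : nat) (I : eqType) (s : seq I) (j0 : I)
  (Y : 'M[R[i]]_r) (F G : I -> 'M[R[i]]_r) :
  uniq s -> j0 \in s -> F j0 *m Y = G j0 -> (forall i, i != j0 -> F i = G i) ->
  (forall i, i != j0 -> Y *m F i = F i *m Y) ->
  \big[mulmx/1%:M]_(i <- s) F i *m Y = \big[mulmx/1%:M]_(i <- s) G i.
Proof.
move=> + + h0 hFG hc; elim: s => [|h s IH] //= /andP[hns us].
rewrite in_cons !big_cons => hj; case: (eqVneq h j0) => [e|ne].
  subst h; rewrite -mulmxA -comm_big; last first.
    by move=> i hi; apply: hc; apply/eqP => e; rewrite -e hi in hns.
  by rewrite mulmxA h0 (@big_eq_notin _ _ _ _ _ _ G _ hFG).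
move: hj; rewrite eq_sym (negbTE ne) /= => hj.
by rewrite -mulmxA IH // hFG.
Qed.

Lemma poch_key (R : realType) (r : nat) (X : 'M[R[i]]_r) N :
  poch (X + 1%:M) N - poch X N = (N%:R) *: poch (X + 1%:M) N.-1.
Proof.
case: N => [|M] /=; first by rewrite !poch0 scale0r subrr.
rewrite pochS_r pochS_l.
have c : X *m poch (X + 1%:M) M = poch (X + 1%:M) M *m X.
  by apply: comm_poch; rewrite mulmxDr mulmxDl mulmx1 mul1mx.
rewrite c -mulmxBr.
have -> : X + 1%:M + (M%:R)%:M - X = (M.+1%:R)%:M.
  by rewrite addrC -addrA addKr -raddfD /= addrC natr1.
by rewrite scalar_mxC mul_scalar_mx.
Qed.

Lemma tele_up (R : realType) (r : nat) (X : 'M[R[i]]_r) N n :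
  poch (X + (n%:R)%:M) N =
  poch X N + (N%:R) *: \sum_(1 <= n1 < n.+1) poch (X + (n1%:R)%:M) N.-1.
Proof.
elim: n => [|n IH]; first by rewrite big_geq // scaler0 addr0 raddf0 addr0.
rewrite big_nat_recr //= scalerDr addrA -IH.
have e : X + (n.+1%:R)%:M = (X + (n%:R)%:M) + 1%:M.
  by rewrite -natr1 raddfD addrA.
by rewrite e -poch_key addrCA subrr addr0.
Qed.

Lemma tele_down (R : realType) (r : nat) (X : 'M[R[i]]_r) N n :
  poch (X - (n%:R)%:M) N =
  poch X N - (N%:R) *: \sum_(0 <= n1 < n) poch (X - (n1%:R)%:M) N.-1.
Proof.
elim: n => [|n IH]; first by rewrite big_geq // scaler0 subr0 raddf0 subr0.
rewrite big_nat_recr //= scalerDr opprD addrA -IH.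
have e : X - (n%:R)%:M = (X - (n.+1%:R)%:M) + 1%:M.
  by rewrite -natr1 raddfD opprD addrA subrK.
by rewrite e -poch_key opprB addrCA subrr addr0.
Qed.

Definition Bp (R : realType) (r k : nat) (B : 'I_k -> 'M[R[i]]_r) (m : 'I_k -> nat) :=
  \big[mulmx/1%:M]_(i < k) poch (B i) (m i).
Definition Cp (R : realType) (r k : nat) (C : 'I_k -> 'M[R[i]]_r) (m : 'I_k -> nat) :=
  \big[mulmx/1%:M]_(i < k) invmx (poch (C i) (m i)).
Arguments Bp {R r k}.
Arguments Cp {R r k}.

Lemma Bshift (R : realType) (r k : nat) (B : 'I_k -> 'M[R[i]]_r) j m :
  (forall j l : 'I_k, B j *m B l = B l *m B j) -> (0 < m j)%N ->
  B j *m Bp (shift1 B j) (mdec j m) = Bp B m.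
Proof.
move=> hB hm; rewrite /Bp.
apply: (@big_left _ _ _ _ j (B j) _ _ (index_enum_uniq _) (mem_index_enum j)).
- by rewrite /shift1 /mdec eqxx -[in RHS](prednK hm) pochS_l.
- by move=> i ne; rewrite /shift1 /mdec (negbTE ne).
- by move=> i ne; rewrite /shift1 /mdec (negbTE ne); apply: comm_poch; apply: hB.
Qed.

Lemma Cshift (R : realType) (r k : nat) (C : 'I_k -> 'M[R[i]]_r) j m :
  (forall (j : 'I_k) (m : nat), C j + (m%:R)%:M \in unitmx) ->
  (forall j l : 'I_k, C j *m C l = C l *m C j) -> (0 < m j)%N ->
  Cp (shift1 C j) (mdec j m) *m invmx (C j) = Cp C m.
Proof.
move=> hCu hC hm; rewrite /Cp.
have hCj : C j \in unitmx by move: (hCu j 0%N); rewrite mulr0n raddf0 addr0.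
apply: (@big_right _ _ _ _ j (invmx (C j)) _ _ (index_enum_uniq _) (mem_index_enum j)).
- rewrite /shift1 /mdec eqxx -[in RHS](prednK hm) pochS_l invmx_mul //.
  by apply: unit_poch; apply: unit_shift; apply: hCu.
- by move=> i ne; rewrite /shift1 /mdec (negbTE ne).
- move=> i ne; rewrite /shift1 /mdec (negbTE ne).
  have hP : poch (C i) (m i) \in unitmx by apply: unit_poch; apply: hCu.
  have h1 : C j *m poch (C i) (m i) = poch (C i) (m i) *m C j.
    by apply: comm_poch; apply: hC.
  have h2 := comm_inv _ _ _ _ hCj h1.
  by symmetry; apply: comm_inv => //; symmetry.
Qed.

Lemma sum_mdec (k : nat) (j : 'I_k) (m : 'I_k -> nat) : (0 < m j)%N ->
  (\sum_(i < k) m i = (\sum_(i < k) mdec j m i).+1)%N.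
Proof.
move=> hm; rewrite (bigD1 j) //= [in RHS](bigD1 j) //= /mdec eqxx -addSn prednK //.
by congr addn; apply: eq_bigr => i /negbTE ->.
Qed.

Lemma prod_mdec (k : nat) (j : 'I_k) (m : 'I_k -> nat) : (0 < m j)%N ->
  (\prod_(i < k) (m i)`! = m j * \prod_(i < k) (mdec j m i)`!)%N.
Proof.
move=> hm; rewrite (bigD1 j) //= [in RHS](bigD1 j) //= /mdec eqxx.
rewrite -[in LHS](prednK hm) factS prednK // mulnA; congr muln.
by apply: eq_bigr => i /negbTE ->.
Qed.

Lemma term (R : realType) (r k : nat) (X : 'M[R[i]]_r) (B C : 'I_k -> 'M[R[i]]_r)
  (j : 'I_k) (m : 'I_k -> nat) :
  (forall (j : 'I_k) (m : nat), C j + (m%:R)%:M \in unitmx) ->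
  (forall j l : 'I_k, B j *m B l = B l *m B j) ->
  (forall j l : 'I_k, C j *m C l = C l *m C j) ->
  X *m B j = B j *m X -> (0 < m j)%N ->
  B j *m lauricella X (shift1 B j) (shift1 C j) (mdec j m) *m invmx (C j) =
  ((m j)%:R / ((\prod_(i < k) (m i)`!)%:R)) *:
     (poch X (\sum_(i < k) m i).-1 *m Bp B m *m Cp C m).
Proof.
move=> hCu hB hC hX hm; rewrite /lauricella -scalemxAr -scalemxAl.
have hs : ((\prod_(i < k) (mdec j m i)`!)%:R)^-1 =
          ((m j)%:R / ((\prod_(i < k) (m i)`!)%:R)) :> R[i].
  have h1 : (m j)%:R != 0 :> R[i] by rewrite pnatr_eq0 -lt0n.
  have h2 : (\prod_(i < k) (mdec j m i)`!)%:R != 0 :> R[i].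
    by rewrite pnatr_eq0 -lt0n prodn_gt0 // => i; apply: fact_gt0.
  rewrite (prod_mdec _ _ _ hm) natrM; field.
  by rewrite h1 h2.
have hp : B j *m poch X (\sum_(i < k) mdec j m i) =
          poch X (\sum_(i < k) mdec j m i) *m B j.
  by apply: comm_poch; rewrite hX.
rewrite hs (sum_mdec _ _ _ hm) /= -(Bshift _ _ _ _ _ _ hB hm) -(Cshift _ _ _ _ _ _ hCu hC hm).
by rewrite /Bp /Cp !mulmxA hp.
Qed.

Lemma mulX_term {R : realType} {r k : nat} (T : nat -> 'M[R[i]]_r) (B C : 'I_k -> 'M[R[i]]_r)
  (j : 'I_k) (m : 'I_k -> nat) (a b : nat) :
  (forall (j : 'I_k) (m : nat), C j + (m%:R)%:M \in unitmx) ->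
  (forall j l : 'I_k, B j *m B l = B l *m B j) ->
  (forall j l : 'I_k, C j *m C l = C l *m C j) ->
  (forall n1, T n1 *m B j = B j *m T n1) ->
  B j *m mulX j (fun m' => \sum_(a <= n1 < b)
                  lauricella (T n1) (shift1 B j) (shift1 C j) m') m *m invmx (C j) =
  ((m j)%:R / ((\prod_(i < k) (m i)`!)%:R)) *:
     ((\sum_(a <= n1 < b) poch (T n1) (\sum_(i < k) m i).-1) *m Bp B m *m Cp C m).
Proof.
move=> hCu hB hC hT; rewrite /mulX; case: (posnP (m j)) => [h0|hm].
  by rewrite h0 /= mulmx0 mul0mx mul0r scale0r.
rewrite mulmx_sumr !mulmx_suml scaler_sumr; apply: eq_bigr => n1 _.
exact: term.
Qed.

Theorem mainTheorem1 (R : realType) (r k : nat) (A : 'M[R[i]]_r)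
    (B C : 'I_k -> 'M[R[i]]_r) (n : nat) :
  (1 <= k)%N ->
  (forall (j : 'I_k) (m : nat), C j + (m%:R)%:M \in unitmx) ->
  (forall j : 'I_k, A *m B j = B j *m A) ->
  (forall j l : 'I_k, B j *m B l = B l *m B j) ->
  (forall j l : 'I_k, C j *m C l = C l *m C j) ->
  (1 <= n)%N ->
  (forall m : nat, A + (m%:R)%:M \in unitmx) ->
  (forall m : 'I_k -> nat,
     lauricella (A + (n%:R)%:M) B C m =
     lauricella A B C m +
     \sum_(j < k) B j *m
        mulX j (fun m' => \sum_(1 <= n1 < n.+1)
                  lauricella (A + (n1%:R)%:M) (shift1 B j) (shift1 C j) m') m
        *m invmx (C j))
  /\
  ((forall n1 : nat, (n1 <= n)%N -> A - (n1%:R)%:M \in unitmx) ->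
   forall m : 'I_k -> nat,
     lauricella (A - (n%:R)%:M) B C m =
     lauricella A B C m -
     \sum_(j < k) B j *m
        mulX j (fun m' => \sum_(0 <= n1 < n)
                  lauricella (A - (n1%:R)%:M) (shift1 B j) (shift1 C j) m') m
        *m invmx (C j)).
Proof.
move=> hk hCu hAB hB hC hn hAu; split.
  move=> m.
  have hT : forall (j : 'I_k) (n1 : nat),
      (A + (n1%:R)%:M) *m B j = B j *m (A + (n1%:R)%:M).
    by move=> j n1; rewrite mulmxDl mulmxDr hAB scalar_mxC.
  rewrite (eq_bigr _ (fun j _ => mulX_term (fun n1 => A + (n1%:R)%:M) B C j m 1 n.+1 hCu hB hC (hT j))).
  rewrite -scaler_suml -mulr_suml -natr_sum /lauricella tele_up /Bp /Cp.
  by rewrite !mulmxDl scalerDr -!scalemxAl scalerA mulrC.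
move=> _ m.
have hT : forall (j : 'I_k) (n1 : nat),
    (A - (n1%:R)%:M) *m B j = B j *m (A - (n1%:R)%:M).
  by move=> j n1; rewrite mulmxBl mulmxBr hAB scalar_mxC.
rewrite (eq_bigr _ (fun j _ => mulX_term (fun n1 => A - (n1%:R)%:M) B C j m 0 n hCu hB hC (hT j))).
rewrite -scaler_suml -mulr_suml -natr_sum /lauricella tele_down /Bp /Cp.
by rewrite !mulmxBl scalerBr -!scalemxAl scalerA mulrC.
Qed.
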